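(* For all integers $k\ge 1$ and $n\ge \max(k,2)$, $$G_k(n) > 2^n\left(2^{\binom nk}-n\,2^{\binom{n-1}{k}}\right).$$ More precisely: for each choice of literals $y_i\in\{x_i,\bar x_i\}$ ($i=1,\dots,n$), every nonempty set of $k$-clauses, each built only from literals among $y_1,\dots,y_n$, and such that every $y_i$ occurs in some clause, defines a $k$-SAT function, and distinct pairs (choice of $(y_i)$, such set of clauses) define distinct functions.
   Context: Variables $X_n=\{x_1,\dots,x_n\}$; literals $x_i$ and $\bar x_i$. A $k$-clause is a conjunction of $k$ literals on $k$ distinct variables; a $k$-SAT formula is a disjunction of $k$-clauses, and the Boolean functions so defined are $k$-SAT functions. $G_k(n)$ is the number of $k$-SAT functions of $n$ variables. *)

(* Defs.v *)
From HB Require Import structures.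
From mathcomp Require Import all_boot all_order all_algebra.
Set Implicit Arguments. Unset Strict Implicit. Unset Printing Implicit Defensive.

(* A literal over X_n is a pair (i, b) : 'I_n * bool;
   (i, true) stands for x_i and (i, false) for \bar x_i. *)
Definition literal (n : nat) : finType := ('I_n * bool)%type.

Definition assignment (n : nat) : finType := {ffun 'I_n -> bool}.
Definition boolfun (n : nat) : finType := {ffun assignment n -> bool}.

Definition lit_eval (n : nat) (a : assignment n) (l : literal n) : bool :=
  a l.1 == l.2.

Definition is_kclause (n k : nat) (C : {set literal n}) : bool :=
  (#|C| == k) &&
  [forall l1 in C, forall l2 in C, (l1.1 == l2.1) ==> (l1 == l2)].

Definition clause_eval (n : nat) (C : {set literal n}) (a : assignment n) : bool :=
  [forall l in C, lit_eval a l].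

Definition is_kformula (n k : nat) (F : {set {set literal n}}) : bool :=
  [forall C in F, is_kclause k C].

Definition formula_eval (n : nat) (F : {set {set literal n}}) (a : assignment n) : bool :=
  [exists C in F, clause_eval C a].

Definition fun_of_formula (n : nat) (F : {set {set literal n}}) : boolfun n :=
  [ffun a => formula_eval F a].

Definition kSAT_functions (k n : nat) : {set boolfun n} :=
  [set f | [exists F : {set {set literal n}}, is_kformula k F && (f == fun_of_formula F)]].

Definition G (k n : nat) : nat := #|kSAT_functions k n|.

(* The sets of clauses in the "more precisely" part: for the choice of
   literals y_i = (i, y i), S is a nonempty set of k-clauses built only from
   literals among the y_i, in which every y_i occurs. *)
Definition good_clause_set (n k : nat) (y : {ffun 'I_n -> bool})
    (S : {set {set literal n}}) : bool :=
  [&& S != set0,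
      [forall C in S, is_kclause k C && [forall l in C, y l.1 == l.2]] &
      [forall i : 'I_n, exists C in S, (i, y i) \in C]].

(* Main.v *)
Require Import Defs.
From HB Require Import structures.
From mathcomp Require Import all_boot all_order all_algebra.
Import Order.TTheory GRing.Theory Num.Theory.
Set Implicit Arguments. Unset Strict Implicit. Unset Printing Implicit Defensive.

Definition vars (n : nat) (C : {set literal n}) : {set 'I_n} := [set l.1 | l in C].
Definition clause_of (n : nat) (y : {ffun 'I_n -> bool}) (A : {set 'I_n}) : {set literal n} :=
  [set ((i, y i) : literal n) | i in A].
Definition agree (n : nat) (y : {ffun 'I_n -> bool}) (A : {set 'I_n}) : assignment n :=
  [ffun j => if j \in A then y j else ~~ y j].
Definition yclause (n : nat) (y : {ffun 'I_n -> bool}) (C : {set literal n}) : bool :=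
  [forall l in C, y l.1 == l.2].

Lemma lit_inj (n : nat) (y : {ffun 'I_n -> bool}) : injective (fun i : 'I_n => ((i, y i) : literal n)).
Proof. by move=> i j [->]. Qed.

Lemma mem_clause_of (n : nat) (y : {ffun 'I_n -> bool}) (A : {set 'I_n}) i :
  (((i, y i) : literal n) \in clause_of y A) = (i \in A).
Proof. exact: (mem_imset _ _ (@lit_inj n y)). Qed.

Lemma card_clause_of (n : nat) (y : {ffun 'I_n -> bool}) (A : {set 'I_n}) : #|clause_of y A| = #|A|.
Proof. exact: (card_imset _ (@lit_inj n y)). Qed.

Lemma clause_of_inj (n : nat) (y : {ffun 'I_n -> bool}) : injective (@clause_of n y).
Proof.
move=> A B h; apply/setP => i; by rewrite -!(mem_clause_of y) h.
Qed.

Lemma clause_vars (n : nat) (y : {ffun 'I_n -> bool}) (C : {set literal n}) :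
  yclause y C -> C = clause_of y (vars C).
Proof.
move/forall_inP => hC; apply/setP => -[i b]; apply/idP/idP.
- move=> hl; have := hC _ hl => /= /eqP <-.
  by rewrite mem_clause_of; apply/imsetP; exists (i, b).
- case/imsetP => j /imsetP [l hl ->] [-> ->].
  have := hC _ hl => /eqP ->; by case: l hl.
Qed.

Lemma card_vars (n k : nat) (y : {ffun 'I_n -> bool}) (C : {set literal n}) :
  is_kclause k C -> yclause y C -> #|vars C| = k.
Proof.
move=> /andP [/eqP hk _] hy; by rewrite -(card_clause_of y) -clause_vars.
Qed.


Lemma eval_agree (n : nat) (y : {ffun 'I_n -> bool}) (A : {set 'I_n}) (D : {set literal n}) :
  yclause y D -> clause_eval D (agree y A) = (vars D \subset A).
Proof.
move/forall_inP => hD; apply/forall_inP/subsetP.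
- move=> h i /imsetP [l hl ->]; have := h _ hl; have := hD _ hl.
  rewrite /lit_eval /agree ffunE => /eqP <-; case: (l.1 \in A) => //.
  by case: (y l.1).
- move=> h l hl; rewrite /lit_eval /agree ffunE.
  have -> : l.1 \in A by apply: h; apply/imsetP; exists l.
  exact: hD.
Qed.

Lemma clause_of_k (n k : nat) (y : {ffun 'I_n -> bool}) (A : {set 'I_n}) :
  #|A| = k -> is_kclause k (clause_of y A) && yclause y (clause_of y A).
Proof.
move=> hA; apply/andP; split; [apply/andP; split|].
- by rewrite card_clause_of hA.
- apply/forall_inP => l1 /imsetP [i _ ->]; apply/forall_inP => l2 /imsetP [j _ ->].
  by apply/implyP => /= /eqP ->.
- by rewrite /yclause; apply/forall_inP => l /imsetP [i _ ->].
Qed.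

Lemma good_parts (n k : nat) (y : {ffun 'I_n -> bool}) (S : {set {set literal n}}) :
  good_clause_set k y S ->
  [/\ S != set0, (forall C, C \in S -> is_kclause k C && yclause y C) &
      (forall i, exists2 C, C \in S & ((i, y i) : literal n) \in C)].
Proof.
case/and3P => h1 /forall_inP h2 /forallP h3; split => // i.
by have /exists_inP [C hC hiC] := h3 i; exists C.
Qed.

Lemma in_vars (n : nat) (C : {set literal n}) (l : literal n) : l \in C -> l.1 \in vars C.
Proof. by move=> hl; apply/imsetP; exists l. Qed.

Lemma fevalP (n : nat) (S : {set {set literal n}}) a :
  reflect (exists2 C, C \in S & clause_eval C a) (formula_eval S a).
Proof. exact: exists_inP. Qed.

Lemma good_inj (n k : nat) (y1 y2 : {ffun 'I_n -> bool}) (S1 S2 : {set {set literal n}}) :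
  good_clause_set k y1 S1 -> good_clause_set k y2 S2 ->
  fun_of_formula S1 = fun_of_formula S2 -> y1 = y2 /\ S1 = S2.
Proof.
move=> g1 g2 h.
have he a : formula_eval S1 a = formula_eval S2 a.
  by have := congr1 (fun f : boolfun n => f a) h; rewrite !ffunE.
have [_ h12 h13] := good_parts g1.
have [_ h22 h23] := good_parts g2.
have ey : y1 = y2.
  apply/ffunP => i; apply/eqP/negPn/negP => hne.
  have [C hC hiC] := h13 i.
  have /andP [hCk hCy] := h12 _ hC.
  have hiv : i \in vars C by exact: (in_vars hiC).
  have hfalse : ~~ formula_eval S1 (agree y1 (vars C :\ i)).
    apply/negP => /fevalP [D hD hDe].
    have /andP [hDk hDy] := h12 _ hD.
    move: hDe; rewrite eval_agree // => /subset_leq_card.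
    rewrite (card_vars hDk hDy).
    have := cardsD1 i (vars C); rewrite hiv (card_vars hCk hCy) => ->.
    by rewrite add1n ltnn.
  have htrue : formula_eval S1 (agree y1 (vars C)).
    by apply/fevalP; exists C => //; rewrite eval_agree.
  move: htrue; rewrite he => /fevalP [D hD hDe].
  have /andP [hDk hDy] := h22 _ hD.
  move: hfalse; rewrite he => /negP; apply; apply/fevalP; exists D => //.
  rewrite /clause_eval /yclause in hDe hDy *.
  apply/forall_inP => l hl.
  move/forall_inP: hDe => /(_ l hl); move/forall_inP: hDy => /(_ l hl).
  rewrite /lit_eval /agree !ffunE in_setD1.
  case: (eqVneq l.1 i) => [hli | hli] //=.
  rewrite hli hiv => /eqP <- /eqP hh; by rewrite hh eqxx in hne.
subst y2; split => //.
suff sub : forall (Sa Sb : {set {set literal n}}),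
    (forall C, C \in Sa -> is_kclause k C && yclause y1 C) ->
    (forall C, C \in Sb -> is_kclause k C && yclause y1 C) ->
    (forall a, formula_eval Sa a = formula_eval Sb a) -> Sa \subset Sb.
  by apply/eqP; rewrite eqEsubset; apply/andP; split; apply: sub => // a; rewrite he.
move=> Sa Sb ha hb hab; apply/subsetP => C hC.
have /andP [hCk hCy] := ha _ hC.
have : formula_eval Sa (agree y1 (vars C)).
  by apply/fevalP; exists C => //; rewrite eval_agree.
rewrite hab => /fevalP [D hD hDe].
have /andP [hDk hDy] := hb _ hD.
move: hDe; rewrite eval_agree // => hsub.
have eV : vars D = vars C.
  apply/eqP; rewrite eqEcard hsub (card_vars hDk hDy) (card_vars hCk hCy) /=; exact: leqnn.
by rewrite (clause_vars hCy) -eV -(clause_vars hDy).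
Qed.

Lemma card_bigcup_le (I T : finType) (F : I -> {set T}) :
  #|\bigcup_i F i| <= \sum_i #|F i|.
Proof.
elim/big_rec2: _ => [|i A m _ hA]; first by rewrite cards0.
apply: leq_trans (leq_card_setU _ _) _; by rewrite leq_add2l.
Qed.

Lemma good_count (n k : nat) (y : {ffun 'I_n -> bool}) (n0 : 0 < n) :
  2 ^ 'C(n, k) <= #|[set S | good_clause_set k y S]| + n * 2 ^ 'C(n.-1, k).
Proof.
set Cy := [set C : {set literal n} | is_kclause k C && yclause y C].
set Ci := fun i : 'I_n => [set C in Cy | ((i, y i) : literal n) \notin C].
have hCy : 'C(n, k) <= #|Cy|.
  have := card_draws ('I_n) k; rewrite card_ord => <-.
  rewrite -(card_imset _ (@clause_of_inj n y)).
  apply: subset_leq_card; apply/subsetP => C /imsetP [A hA ->].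
  rewrite inE; apply: clause_of_k; by move: hA; rewrite inE => /eqP.
have hCi i : #|Ci i| <= 'C(n.-1, k).
  have := cards_draws [set~ i] k; rewrite cardsC1 card_ord => <-.
  rewrite -(card_imset _ (@clause_of_inj n y)).
  apply: subset_leq_card; apply/subsetP => C; rewrite !inE => /andP [/andP [hCk hCy'] hni].
  rewrite (clause_vars hCy') mem_clause_of in hni.
  rewrite (clause_vars hCy'); apply: imset_f.
  rewrite inE (card_vars hCk hCy') eqxx andbT.
  apply/subsetP => j hj; rewrite !inE; apply/eqP => hji; subst j.
  by rewrite hj in hni.
have hcover : powerset Cy \subset
    [set S | good_clause_set k y S] :|: \bigcup_i powerset (Ci i).
  apply/subsetP => S; rewrite powersetE => hS.
  apply/setUP; case hg: (good_clause_set k y S); [by left; rewrite inE | right].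
  apply/bigcupP.
  have hmid : [forall C in S, is_kclause k C && [forall l in C, y l.1 == l.2]].
    by apply/forall_inP => C hC; have := subsetP hS C hC; rewrite inE.
  case: (boolP [forall i : 'I_n, exists C in S, ((i, y i) : literal n) \in C]) => hcov.
  - exists (Ordinal n0) => //; rewrite powersetE.
    move: hg; rewrite /good_clause_set hmid hcov !andbT => /negbFE /eqP ->.
    exact: sub0set.
  - move/forallPn: hcov => [i hi]; exists i => //; rewrite powersetE.
    apply/subsetP => C hC; rewrite inE (subsetP hS C hC) /=.
    apply/negP => hin; move/negP: hi; apply; apply/exists_inP; by exists C.
apply: (leq_trans (leq_pexp2l (isT : 0 < 2) hCy)).
rewrite -card_powerset.
apply: leq_trans (subset_leq_card hcover) _.
apply: leq_trans (leq_card_setU _ _) _; rewrite leq_add2l.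
apply: leq_trans (card_bigcup_le _) _.
apply: leq_trans (_ : \sum_(i : 'I_n) 2 ^ 'C(n.-1, k) <= _).
  apply: leq_sum => i _; rewrite card_powerset; apply: leq_pexp2l => //; exact: hCi.
by rewrite sum_nat_const card_ord.
Qed.

Unset Implicit Arguments.
Theorem mainTheorem3 (k n : nat) (hk : 1 <= k) (hn : maxn k 2 <= n) :
  ((2 ^ n)%:Z * ((2 ^ 'C(n, k))%:Z - (n * 2 ^ 'C(n.-1, k))%:Z) < (G k n)%:Z)%R
  /\
  (forall (y : {ffun 'I_n -> bool}) (S : {set {set literal n}}),
      good_clause_set k y S -> fun_of_formula S \in kSAT_functions k n)
  /\
  (forall (y1 y2 : {ffun 'I_n -> bool}) (S1 S2 : {set {set literal n}}),
      good_clause_set k y1 S1 -> good_clause_set k y2 S2 ->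
      fun_of_formula S1 = fun_of_formula S2 -> y1 = y2 /\ S1 = S2).
Proof.
have n0 : 0 < n by apply: leq_trans _ (leq_trans (leq_maxr k 2) hn).
have part2 : forall (y : {ffun 'I_n -> bool}) (S : {set {set literal n}}),
    good_clause_set k y S -> fun_of_formula S \in kSAT_functions k n.
  move=> y S g; have [_ h2 _] := good_parts g.
  rewrite inE; apply/existsP; exists S; rewrite eqxx andbT.
  by apply/forall_inP => C hC; have /andP [] := h2 C hC.
split; last by split => //; exact: good_inj.
set P := [set p : {ffun 'I_n -> bool} * {set {set literal n}} | good_clause_set k p.1 p.2].
have hPsum : #|P| = \sum_(y : {ffun 'I_n -> bool}) #|[set S | good_clause_set k y S]|.
  have -> : \sum_(y : {ffun 'I_n -> bool}) #|[set S | good_clause_set k y S]| =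
      \sum_(y : {ffun 'I_n -> bool}) \sum_(S : {set {set literal n}}) (good_clause_set k y S : nat).
    apply: eq_bigr => y _; rewrite -sum1_card big_mkcond; apply: eq_bigr => S _.
    by rewrite inE; case: good_clause_set.
  rewrite pair_big /= -sum1_card big_mkcond; apply: eq_bigr => p _.
  by rewrite inE; case: good_clause_set.
have hP : 2 ^ n * 2 ^ 'C(n, k) <= #|P| + 2 ^ n * (n * 2 ^ 'C(n.-1, k)).
  have hc : #|{ffun 'I_n -> bool}| = 2 ^ n by rewrite card_ffun card_bool card_ord.
  rewrite hPsum -hc -!sum_nat_const -big_split /=.
  by apply: leq_sum => y _; exact: good_count.
set Im := [set fun_of_formula p.2 | p in P].
have hIm : #|Im| = #|P|.
  apply: card_in_imset => -[y1 S1] [y2 S2]; rewrite !inE /= => g1 g2 e.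
  by have [-> ->] := good_inj g1 g2 e.
have h0 : fun_of_formula set0 \notin Im.
  apply/negP => /imsetP [[y S] hp e]; move: hp; rewrite inE /= => g.
  have [hne h2 _] := good_parts g.
  have := congr1 (fun f : boolfun n => f y) e; rewrite !ffunE.
  have -> : formula_eval (set0 : {set {set literal n}}) y = false.
    by apply: negbTE; apply/negP => /fevalP [C]; rewrite in_set0.
  case/set0Pn: hne => C hC.
  have /andP [_ hCy] := h2 C hC.
  suff -> : formula_eval S y by [].
  by apply/fevalP; exists C.
have hsub : fun_of_formula set0 |: Im \subset kSAT_functions k n.
  apply/subsetP => f; rewrite in_setU1 => /orP [/eqP -> | /imsetP [p hp ->]].
  - rewrite inE; apply/existsP; exists set0; rewrite eqxx andbT.
    by apply/forall_inP => C; rewrite in_set0.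
  - by move: hp; rewrite inE => /part2.
have hG : #|P| < G k n.
  have := subset_leq_card hsub; rewrite cardsU1 h0 hIm add1n => hh.
  exact: hh.
rewrite mulrBr -!PoszM ltrBlDr -PoszD ltz_nat.
apply: leq_ltn_trans hP _; by rewrite ltn_add2r.
Qed.
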